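(* Let $X\subseteq G_n$ be a finite set of Hermitian Pauli operators. If there exist a Pauli operator $x$, a determining tree $\tau_x$ for $x$ over $X$, and a determining tree $\tau'_{-x}$ for $-x$ over $X$ such that $D(\tau_x)=D(\tau'_{-x})$, then $X$ is state-independently AvN in a partial closure, i.e. $\mathbb{T}_{\mathbb{Z}_2}(\overline{X})$ is inconsistent.
   Context: $G_n$ is the $n$-qubit Pauli group ($c\,P_1\otimes\cdots\otimes P_n$, $c\in\{\pm1,\pm i\}$, $P_j\in\{I,X,Y,Z\}$). The partial closure $\overline{X}$ of $X$ in $G_n$ is the smallest subset of $G_n$ containing $X\cup\{I\}$ that is closed under products of commuting pairs (if $a,b\in\overline{X}$ and $ab=ba$ then $ab\in\overline{X}$); equivalently the smallest abelian partial group in $G_n$ (with commutativity as the commeasurability relation and multiplication defined on commuting pairs) containing $X$. For a set $Y$ of Hermitian Pauli operators, its measurement cover $\mathcal{M}_Y$ is the family of maximal pairwise-commuting subsets of $Y$, and its linear theory is $\mathbb{T}_{\mathbb{Z}_2}(Y)=\{\langle C,r,a\rangle: C\in\mathcal{M}_Y,\ r:C\to\mathbb{Z}_2,\ a\in\mathbb{Z}_2,\ \prod_{y\in C}y^{r(y)}=(-1)^aI\}$; it is inconsistent if no $g:Y\to\mathbb{Z}_2$ satisfies $\sum_{y\in C}r(y)g(y)=a$ (mod 2) for all $\langle C,r,a\rangle$ in it. $X$ is state-independently AvN in a partial closure if $\mathbb{T}_{\mathbb{Z}_2}(\overline{X})$ is inconsistent. A determining tree $\tau_x$ for a Pauli operator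 $x$ over $X$ is a finite rooted tree whose nodes are labelled by Pauli operators and whose leaves are labelled by elements of $X$, such that the root is $x$, the children of any node pairwise commute, and every non-leaf node is the operator product of its children. The determining set $D(\tau_x)$ is the set of operators occurring an odd number of times as leaf labels of $\tau_x$. *)

(* Defs.v *)
From HB Require Import structures.
From mathcomp Require Import all_boot all_order all_algebra.
Set Implicit Arguments. Unset Strict Implicit. Unset Printing Implicit Defensive.
Import GRing.Theory.

Inductive pauli1 := PI | PX | PY | PZ.

Definition pauli1_code (p : pauli1) : 'I_4 :=
  match p with PI => inord 0 | PX => inord 1 | PY => inord 2 | PZ => inord 3 end.
Definition pauli1_decode (i : 'I_4) : pauli1 :=
  match val i with 0 => PI | 1 => PX | 2 => PY | _ => PZ end.
Lemma pauli1_codeK : cancel pauli1_code pauli1_decode.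
Proof. by case; rewrite /pauli1_decode /= inordK. Qed.
HB.instance Definition _ := Finite.copy pauli1 (can_type pauli1_codeK).

(* Product of single-qubit Paulis: P * Q = i^k R, returned as (k, R). *)
Definition mul1 (p q : pauli1) : 'Z_4 * pauli1 :=
  match p, q with
  | PI, r | r, PI => (0%R, r)
  | PX, PX | PY, PY | PZ, PZ => (0%R, PI)
  | PX, PY => (1%R, PZ) | PY, PX => ((-1)%R, PZ)
  | PY, PZ => (1%R, PX) | PZ, PY => ((-1)%R, PX)
  | PZ, PX => (1%R, PY) | PX, PZ => ((-1)%R, PY)
  end.

(* (k, P) represents the operator i^k P_1 (x) ... (x) P_n, k in Z_4.
   Distinct pairs represent distinct operators, so this is a faithful
   encoding of G_n. *)
Definition pauli (n : nat) := ('Z_4 * {ffun 'I_n -> pauli1})%type.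

Definition pid (n : nat) : pauli n := (0%R, [ffun => PI]).

Definition pmul (n : nat) (a b : pauli n) : pauli n :=
  ((a.1 + b.1 + \sum_(j < n) (mul1 (a.2 j) (b.2 j)).1)%R,
   [ffun j => (mul1 (a.2 j) (b.2 j)).2]).

Definition pneg (n : nat) (a : pauli n) : pauli n := ((a.1 + (2%:R)%R)%R, a.2).

Definition pcommute (n : nat) (a b : pauli n) : bool := pmul a b == pmul b a.

Definition hermitian (n : nat) (a : pauli n) : bool :=
  (a.1 == 0%R) || (a.1 == (2%:R)%R).

Definition partially_closed (n : nat) (S : {set pauli n}) : bool :=
  [forall a in S, forall b in S, pcommute a b ==> (pmul a b \in S)].

Definition pclosure (n : nat) (X : {set pauli n}) : {set pauli n} :=
  \bigcap_(S : {set pauli n} | (pid n |: X \subset S) && partially_closed S) S.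

Definition pairwise_commuting (n : nat) (C : {set pauli n}) : bool :=
  [forall a in C, forall b in C, pcommute a b].

Definition meas_cover (n : nat) (Y : {set pauli n}) : {set {set pauli n}} :=
  [set C | maxset (fun C : {set pauli n} => (C \subset Y) && pairwise_commuting C) C].

(* prod_{y in C} y^{r(y)}, r : C -> Z_2 (values outside C irrelevant) *)
Definition pprod_pow (n : nat) (C : {set pauli n}) (r : pauli n -> bool) : pauli n :=
  \big[@pmul n/pid n]_(y in C) (if r y then y else pid n).

Definition sign_id (n : nat) (a : bool) : pauli n :=
  if a then pneg (pid n) else pid n.

Definition in_theory (n : nat) (Y : {set pauli n}) (C : {set pauli n})
  (r : pauli n -> bool) (a : bool) : Prop :=
  C \in meas_cover Y /\ pprod_pow C r = sign_id n a.

Definition theory_inconsistent (n : nat) (Y : {set pauli n}) : Prop :=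
  ~ exists g : pauli n -> bool,
      forall (C : {set pauli n}) (r : pauli n -> bool) (a : bool),
        in_theory Y C r a ->
        \big[addb/false]_(y in C) (r y && g y) = a.

Inductive ptree (n : nat) := PNode of pauli n & seq (ptree n).

Definition plabel (n : nat) (t : ptree n) : pauli n :=
  let: PNode x _ := t in x.

Fixpoint wf_det_tree (n : nat) (X : {set pauli n}) (t : ptree n) : bool :=
  let: PNode x cs := t in
  match cs with
  | [::] => x \in X
  | _ :: _ =>
      pairwise (@pcommute n) (map (@plabel n) cs) &&
      (x == foldr (@pmul n) (pid n) (map (@plabel n) cs)) &&
      (fix all_wf (l : seq (ptree n)) : bool :=
         match l with [::] => true | c :: l' => wf_det_tree X c && all_wf l' end) cs
  end.

Definition is_det_tree (n : nat) (X : {set pauli n}) (x : pauli n) (t : ptree n) : Prop :=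
  plabel t = x /\ wf_det_tree X t.

Fixpoint leaves (n : nat) (t : ptree n) : seq (pauli n) :=
  let: PNode x cs := t in
  match cs with
  | [::] => [:: x]
  | _ :: _ =>
      (fix lv (l : seq (ptree n)) : seq (pauli n) :=
         match l with [::] => [::] | c :: l' => leaves c ++ lv l' end) cs
  end.

Definition det_set (n : nat) (t : ptree n) : {set pauli n} :=
  [set y | odd (count_mem y (leaves t))].

(* Main.v *)
Require Import Defs.
From mathcomp Require Import all_boot.
From mathcomp Require Import all_algebra.
Import Defs.
Import GRing.Theory.
Set Implicit Arguments. Unset Strict Implicit.
Local Open Scope ring_scope.

Lemma z4 (u v w : 'Z_4) :
   ((u == 0) || (u == 2%:R)) -> ((v == 0) || (v == 2%:R)) -> (w + w == 0) ->
   ((u+v+w == 0) || (u+v+w == 2%:R)).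
Proof.
case: u => [[|[|[|[|//]]]] ?]; case: v => [[|[|[|[|//]]]] ?]; case: w => [[|[|[|[|//]]]] ?]; by [].
Qed.

Lemma zperm (x y z s1 s2 s3 s4 : 'Z_4) : s1+s2=s3+s4 -> x+y+s1+z+s2 = x+(y+z+s3)+s4.
Proof.
move=> E. rewrite [X in X + s2]addrAC -[LHS]addrA E.
by rewrite !addrA.
Qed.
Lemma zSS (a b S : 'Z_4) : a + b + S = b + a + - S -> S + S = 0.
Proof.
move=> E. have: (a + b + S) - (b + a + - S) = 0 by rewrite E subrr.
by rewrite opprD opprK (addrC b a) addrCA -(addrA (a+b)) addKr.
Qed.

Lemma mul1_assoc_phase p q r :
  (mul1 p q).1 + (mul1 (mul1 p q).2 r).1 = (mul1 q r).1 + (mul1 p (mul1 q r).2).1.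
Proof. by case: p; case: q; case: r; apply/eqP. Qed.
Lemma mul1_assoc_lab p q r :
  (mul1 (mul1 p q).2 r).2 = (mul1 p (mul1 q r).2).2.
Proof. by case: p; case: q; case: r. Qed.
Lemma mul1_anti p q : (mul1 q p).1 = - (mul1 p q).1.
Proof. by case: p; case: q; apply/eqP. Qed.
Lemma mul1I p : mul1 PI p = (0, p). Proof. by case: p. Qed.
Lemma mul1r p : mul1 p PI = (0, p). Proof. by case: p. Qed.
Lemma mul1sq p : mul1 p p = (0, PI). Proof. by case: p. Qed.

Lemma pmulA n : associative (@pmul n).
Proof.
move=> a b c; rewrite /pmul /=; congr (_, _); last first.
  by apply/ffunP => j; rewrite !ffunE mul1_assoc_lab.
have E : \sum_(j < n) (mul1 (a.2 j) (b.2 j)).1 +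
         \sum_(j < n) (mul1 ([ffun j => (mul1 (a.2 j) (b.2 j)).2] j) (c.2 j)).1 =
         \sum_(j < n) (mul1 (b.2 j) (c.2 j)).1 +
         \sum_(j < n) (mul1 (a.2 j) ([ffun j => (mul1 (b.2 j) (c.2 j)).2] j)).1.
  by rewrite -!big_split; apply: eq_bigr => j _; rewrite !ffunE; exact: mul1_assoc_phase.
move: E; set s1 := \sum_(j < n) _; set s2 := \sum_(j < n) _;
  set s3 := \sum_(j < n) _; set s4 := \sum_(j < n) _ => E.
symmetry; exact: zperm.
Qed.

Lemma pmul1 n (a : pauli n) : pmul (pid n) a = a.
Proof.
case: a => a1 a2; rewrite /pmul /=; congr (_, _).
  by rewrite big1 ?add0r ?addr0 // => j _; rewrite ffunE mul1I.
by apply/ffunP => j; rewrite !ffunE mul1I.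
Qed.

Lemma pmulr1 n (a : pauli n) : pmul a (pid n) = a.
Proof.
case: a => a1 a2; rewrite /pmul /=; congr (_, _).
  by rewrite big1 ?add0r ?addr0 // => j _; rewrite ffunE mul1r.
by apply/ffunP => j; rewrite !ffunE mul1r.
Qed.

Lemma herm_sq n (a : pauli n) : hermitian a -> pmul a a = pid n.
Proof.
case: a => a1 a2; rewrite /hermitian /pmul /pid /= => H; congr (_, _).
  rewrite big1 ?addr0; last by move=> j _; rewrite mul1sq.
  by case/orP: H => /eqP ->; apply/eqP.
by apply: eq_ffun => j; rewrite mul1sq.
Qed.

Lemma pcomm_refl n (a : pauli n) : pcommute a a.
Proof. by rewrite /pcommute eqxx. Qed.
Lemma pcomm_sym n (a b : pauli n) : pcommute a b -> pcommute b a.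
Proof. by rewrite /pcommute eq_sym. Qed.
Lemma pcomm_pid n (a : pauli n) : pcommute a (pid n).
Proof. by rewrite /pcommute pmul1 pmulr1. Qed.
Lemma pcomm_mul n (a b c : pauli n) :
  pcommute a b -> pcommute a c -> pcommute a (pmul b c).
Proof.
rewrite /pcommute => /eqP Hb /eqP Hc; apply/eqP.
by rewrite pmulA Hb -pmulA Hc pmulA.
Qed.

Lemma herm_mul n (a b : pauli n) :
  hermitian a -> hermitian b -> pcommute a b -> hermitian (pmul a b).
Proof.
rewrite /pcommute /hermitian => Ha Hb /eqP/(congr1 fst) /= E.
set S := \sum_(j < n) _ in E *.
have ES : \sum_(j < n) (mul1 (b.2 j) (a.2 j)).1 = - S.
  by rewrite /S -sumrN; apply: eq_bigr => j _; rewrite mul1_anti.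
rewrite ES in E.
have SS : S + S == 0 by rewrite (zSS E).
exact: z4.
Qed.

Lemma herm_neg n (a : pauli n) : hermitian a -> hermitian (pneg a).
Proof.
rewrite /hermitian /pneg /=; case: a => [[[|[|[|[|//]]]] ?] a2]; by [].
Qed.

Lemma herm_pid n : hermitian (pid n). Proof. by rewrite /hermitian eqxx. Qed.

Lemma pmul_neg n (a : pauli n) : hermitian a -> pmul a (pneg a) = pneg (pid n).
Proof.
case: a => a1 a2; rewrite /hermitian /pmul /pneg /pid /= => H; congr (_, _).
  rewrite big1 ?addr0; last by move=> j _; rewrite mul1sq.
  by case/orP: H => /eqP ->; apply/eqP.
by apply: eq_ffun => j; rewrite mul1sq.
Qed.

Lemma pcomm_neg n (a : pauli n) : pcommute a (pneg a).
Proof.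
by rewrite /pcommute /pmul /pneg /=; apply/eqP; congr (_ + _, _); rewrite addrC.
Qed.

Local Close Scope ring_scope.


Lemma pcl_sub n (X : {set pauli n}) : pid n |: X \subset pclosure X.
Proof. by apply/bigcapsP => S /andP[]. Qed.

Lemma pcl_pid n (X : {set pauli n}) : pid n \in pclosure X.
Proof. by rewrite (subsetP (pcl_sub X)) // !inE eqxx. Qed.

Lemma pcl_X n (X : {set pauli n}) y : y \in X -> y \in pclosure X.
Proof. by move=> Hy; rewrite (subsetP (pcl_sub X)) // !inE Hy orbT. Qed.

Lemma pcl_closed n (X : {set pauli n}) a b :
  a \in pclosure X -> b \in pclosure X -> pcommute a b -> pmul a b \in pclosure X.
Proof.
move=> /bigcapP Ha /bigcapP Hb c; apply/bigcapP => S HS.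
move: (HS) => /andP[_ /forallP/(_ a)/implyP/(_ (Ha S HS))/forallP/(_ b)/implyP/(_ (Hb S HS))/implyP].
exact.
Qed.

Lemma pcl_herm n (X : {set pauli n}) a :
  (forall y, y \in X -> hermitian y) -> a \in pclosure X -> hermitian a.
Proof.
move=> HX Ha.
have sub : pclosure X \subset [set y | hermitian y].
  apply: bigcap_inf; apply/andP; split.
    apply/subsetP => y; rewrite !inE => /orP[/eqP ->|/HX //]; exact: herm_pid.
  apply/forallP => x; apply/implyP; rewrite inE => Hx.
  apply/forallP => y; apply/implyP; rewrite inE => Hy.
  by apply/implyP => Hc; rewrite inE herm_mul.
by move/subsetP: sub => /(_ a Ha); rewrite inE.
Qed.

Lemma foldr_pull n (x z : pauli n) l :
  all (pcommute x) l -> foldr (@pmul n) (pmul x z) l = pmul x (foldr (@pmul n) z l).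
Proof.
elim: l => [|y l IH] //= /andP[Hxy Hl].
by rewrite IH // pmulA -(eqP Hxy) -pmulA.
Qed.

Lemma foldr_z n (z : pauli n) l : foldr (@pmul n) z l = pmul (foldr (@pmul n) (pid n) l) z.
Proof.
elim: l => [|y l IH] /=; first by rewrite pmul1.
by rewrite IH pmulA.
Qed.

Lemma foldr_perm n (s1 s2 : seq (pauli n)) :
  perm_eq s1 s2 -> {in s1 &, forall a b, pcommute a b} ->
  foldr (@pmul n) (pid n) s1 = foldr (@pmul n) (pid n) s2.
Proof.
elim: s1 s2 => [|x s1 IH] s2 Hp Hc.
  by move: Hp; rewrite perm_sym => /perm_nilP ->.
have xs2 : x \in s2 by rewrite -(perm_mem Hp) mem_head.
case/splitPr: xs2 Hp => p1 p2 Hp.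
have Hp' : perm_eq s1 (p1 ++ p2).
  by move: Hp; rewrite perm_sym -[x :: p2]cat1s perm_catCA /= perm_cons perm_sym.
rewrite /= foldr_cat /= foldr_pull; last first.
  apply/allP => y Hy; apply: Hc; first exact: mem_head.
  by rewrite (perm_mem Hp) mem_cat Hy.
rewrite -foldr_cat -IH //.
by move=> a b Ha Hb; apply: Hc; rewrite inE ?Ha ?Hb orbT.
Qed.

Lemma big_foldr n (s : seq (pauli n)) (F : pauli n -> pauli n) :
  \big[@pmul n/pid n]_(i <- s) F i = foldr (@pmul n) (pid n) (map F s).
Proof. by elim: s => [|y s IH]; rewrite ?big_nil ?big_cons ?IH. Qed.

Lemma foldr_drop n (T : {set pauli n}) s :
  foldr (@pmul n) (pid n) (map (fun y => if y \in T then y else pid n) s) =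
  foldr (@pmul n) (pid n) [seq y <- s | y \in T].
Proof.
elim: s => [|y s IH] //=; case: (y \in T) => /=; by rewrite IH ?pmul1.
Qed.

Lemma ctx n (Y T : {set pauli n}) (s : seq (pauli n)) (c : bool) (g : pauli n -> bool) :
  (forall C r a, in_theory Y C r a -> \big[addb/false]_(y in C) (r y && g y) = a) ->
  T \subset Y -> pairwise_commuting T -> uniq s -> T =i s ->
  foldr (@pmul n) (pid n) s = sign_id n c ->
  \big[addb/false]_(y <- s) g y = c.
Proof.
move=> Hg TY TC us Ts Hs.
have [C maxC TC'] := @maxset_exists _
  (fun C : {set pauli n} => (C \subset Y) && pairwise_commuting C) T (introT andP (conj TY TC)).
have th : in_theory Y C (fun y => y \in T) c.
  split; first by rewrite inE.
  rewrite /pprod_pow -big_filter big_foldr foldr_drop -Hs.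
  apply: foldr_perm.
    apply: uniq_perm; first by rewrite !filter_uniq // index_enum_uniq.
      by [].
    move=> y; rewrite !mem_filter -Ts mem_index_enum andbT.
    by case yT: (y \in T) => //=; rewrite (subsetP TC').
  move=> a b; rewrite !mem_filter => /andP[aT _] /andP[bT _].
  by move: TC => /forallP/(_ a)/implyP/(_ aT)/forallP/(_ b)/implyP/(_ bT).
rewrite -(Hg _ _ _ th) big_uniq //.
rewrite big_mkcond [RHS]big_mkcond; apply: eq_bigr => y _.
rewrite -Ts; case yT: (y \in T) => /=; last by case: (y \in C).
by rewrite (subsetP TC').
Qed.


Definition gprop n (Y : {set pauli n}) (g : pauli n -> bool) :=
  forall C r a, in_theory Y C r a -> \big[addb/false]_(y in C) (r y && g y) = a.

Lemma g_pid n (X : {set pauli n}) g : gprop (pclosure X) g -> g (pid n) = false.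
Proof.
move=> Hg.
have := @ctx n (pclosure X) [set pid n] [:: pid n] false g Hg.
rewrite big_cons big_nil addbF; apply.
- by rewrite sub1set pcl_pid.
- apply/forallP => a; apply/implyP; rewrite inE => /eqP ->.
  apply/forallP => b; apply/implyP; rewrite inE => /eqP ->; exact: pcomm_refl.
- by [].
- by move=> y; rewrite !inE.
- by rewrite /= pmul1.
Qed.

Lemma g_negI n (X : {set pauli n}) g : gprop (pclosure X) g ->
  pneg (pid n) \in pclosure X -> g (pneg (pid n)) = true.
Proof.
move=> Hg HI.
have := @ctx n (pclosure X) [set pneg (pid n)] [:: pneg (pid n)] true g Hg.
rewrite big_cons big_nil addbF; apply.
- by rewrite sub1set.
- apply/forallP => a; apply/implyP; rewrite inE => /eqP ->.
  apply/forallP => b; apply/implyP; rewrite inE => /eqP ->; exact: pcomm_refl.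
- by [].
- by move=> y; rewrite !inE.
- by rewrite /= pmulr1.
Qed.

Lemma g_hom n (X : {set pauli n}) g a b :
  (forall y, y \in X -> hermitian y) -> gprop (pclosure X) g ->
  a \in pclosure X -> b \in pclosure X -> pcommute a b ->
  g (pmul a b) = g a (+) g b.
Proof.
move=> HX Hg Ha Hb Hab.
have ha := pcl_herm HX Ha; have hb := pcl_herm HX Hb.
have Habc := pcl_closed Ha Hb Hab.
case: (a =P pid n) => [->|na]; first by rewrite pmul1 (g_pid Hg).
case: (b =P pid n) => [->|nb]; first by rewrite pmulr1 (g_pid Hg) addbF.
case: (a =P b) => [<-|nab]; first by rewrite herm_sq // (g_pid Hg) addbb.
case: (pmul a b =P a) => [E|n1].
  case: nb; by rewrite -[b]pmul1 -(herm_sq ha) -pmulA E herm_sq.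
case: (pmul a b =P b) => [E|n2].
  case: na; by rewrite -[a]pmulr1 -(herm_sq hb) pmulA E herm_sq.
have Hcab : pcommute a (pmul a b) by apply: pcomm_mul => //; exact: pcomm_refl.
have Hcbab : pcommute b (pmul a b) by apply: pcomm_mul => //; [exact: pcomm_sym | exact: pcomm_refl].
have memT y : y \in [set a; b; pmul a b] -> [\/ y = a, y = b | y = pmul a b].
  by rewrite !inE => /orP[/orP[]|] /eqP ->; [constructor 1|constructor 2|constructor 3].
have H1 : [set a; b; pmul a b] \subset pclosure X.
  by apply/subsetP => y /memT [] ->.
have H2 : pairwise_commuting [set a; b; pmul a b].
  apply/forallP => y; apply/implyP => /memT Hy.
  apply/forallP => z; apply/implyP => /memT Hz.
  case: Hy => ->; case: Hz => ->;
  by [ exact: pcomm_refl | exact: pcomm_sym | done ].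
have H3 : uniq [:: a; b; pmul a b].
  rewrite /= !inE !negb_or andbT -!andbA.
  by repeat (apply/andP; split); apply/eqP => // /esym.
have H4 : [set a; b; pmul a b] =i [:: a; b; pmul a b] by move=> y; rewrite !inE orbA.
have H5 : foldr (@pmul n) (pid n) [:: a; b; pmul a b] = sign_id n false.
  by rewrite /= pmulr1 pmulA herm_sq // herm_mul.
have := @ctx n (pclosure X) [set a; b; pmul a b] [:: a; b; pmul a b] false g Hg H1 H2 H3 H4 H5.
rewrite !big_cons big_nil addbF.
by case: (g a); case: (g b); case: (g (pmul a b)).
Qed.


Fixpoint ptree_ind' n (Q : ptree n -> Prop)
  (H : forall x cs, foldr (fun c acc => Q c /\ acc) True cs -> Q (PNode x cs))
  (t : ptree n) : Q t :=
  match t with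
  | PNode x cs => H x cs ((fix f (l : seq (ptree n)) : foldr (fun c acc => Q c /\ acc) True l :=
       match l with [::] => I | c :: l' => conj (ptree_ind' H c) (f l') end) cs)
  end.

Fixpoint lvs n (l : seq (ptree n)) : seq (pauli n) :=
  match l with [::] => [::] | c :: l' => leaves c ++ lvs l' end.
Fixpoint allwf n (X : {set pauli n}) (l : seq (ptree n)) : bool :=
  match l with [::] => true | c :: l' => wf_det_tree X c && allwf X l' end.

Lemma leaves_node n x (c : ptree n) cs : leaves (PNode x (c :: cs)) = lvs (c :: cs).
Proof.
elim: cs c => [|c' cs IH] c; first by [].
have := IH c'; rewrite /= => <-; by [].
Qed.
Lemma allwf_node n (X : {set pauli n}) (c : ptree n) cs :
  (fix all_wf (l : seq (ptree n)) : bool :=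
         match l with [::] => true | c :: l' => wf_det_tree X c && all_wf l' end) (c :: cs)
  = allwf X (c :: cs).
Proof.
elim: cs c => [|c' cs IH] c; first by [].
have := IH c'; rewrite /= => <-; by [].
Qed.
Lemma wf_node n (X : {set pauli n}) x c cs : wf_det_tree X (PNode x (c :: cs)) =
  pairwise (@pcommute n) (map (@plabel n) (c :: cs)) &&
  (x == foldr (@pmul n) (pid n) (map (@plabel n) (c :: cs))) && allwf X (c :: cs).
Proof. by rewrite -(allwf_node X). Qed.

Lemma commute_foldr n (a : pauli n) l :
  all (pcommute a) l -> pcommute a (foldr (@pmul n) (pid n) l).
Proof.
elim: l => [|y l IH] /=; first by rewrite pcomm_pid.
by case/andP => H1 H2; apply: pcomm_mul => //; apply: IH.
Qed.

Lemma tree_ok n (X : {set pauli n}) g :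
  (forall y, y \in X -> hermitian y) -> gprop (pclosure X) g ->
  forall t, wf_det_tree X t ->
  plabel t \in pclosure X /\ g (plabel t) = \big[addb/false]_(y <- leaves t) g y.
Proof.
move=> HX Hg t; elim/ptree_ind': t => x [|c cs] Hall.
  by move=> /= Hx; rewrite big_cons big_nil addbF pcl_X.
rewrite wf_node leaves_node => /andP[/andP[Hp /eqP Ex] Hw].
have -> : plabel (PNode x (c :: cs)) = x by [].
rewrite Ex; move: Hall Hp Hw; elim: (c :: cs) => [|d l IH] /=.
  by move=> _ _ _; rewrite pcl_pid big_nil (g_pid Hg).
case=> Qd Ql /andP[Hd Hl] /andP[wd wl].
have [dY gd] := Qd wd.
have [lY gl] := IH Ql Hl wl.
have Hc : pcommute (plabel d) (foldr (@pmul n) (pid n) (map (@plabel n) l))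
  by apply: commute_foldr.
split; first exact: pcl_closed.
by rewrite (g_hom HX Hg dY lY Hc) big_cat gd gl.
Qed.

Lemma parity n (g : pauli n -> bool) (l : seq (pauli n)) :
  \big[addb/false]_(y <- l) g y =
  \big[addb/false]_(y in [set y | odd (count_mem y l)]) g y.
Proof.
elim: l => [|x l IH].
  by rewrite big_nil big1 // => y; rewrite inE.
rewrite big_cons IH big_mkcond [RHS]big_mkcond /=.
rewrite [RHS](eq_bigr (fun y => ((x == y) && g y) (+)
   (if y \in [set y | odd (count_mem y l)] then g y else false))); last first.
  by move=> y _; rewrite !inE /= oddD oddb; case: (x == y); case: (odd _); case: (g y).
have Hx : \big[addb/false]_(i : pauli n) ((x == i) && g i) = g x.
  rewrite (bigD1 x) //= eqxx big1 ?addbF // => y /negbTE.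
  by rewrite eq_sym => ->.
by rewrite big_split /= Hx.
Qed.

Unset Implicit Arguments.

Theorem mainTheorem7 (n : nat) (X : {set pauli n}) :
  (forall y, y \in X -> hermitian y) ->
  forall (x : pauli n) (t t' : ptree n),
    is_det_tree X x t ->
    is_det_tree X (pneg x) t' ->
    det_set t = det_set t' ->
    theory_inconsistent (pclosure X).
Proof.
move=> HX x t t' [Lt Wt] [Lt' Wt'] Hd [g Hg].
have [xY gx] := tree_ok HX Hg Wt; rewrite Lt in xY gx.
have [nxY gnx] := tree_ok HX Hg Wt'; rewrite Lt' in nxY gnx.
rewrite parity in gx; rewrite parity in gnx.
have E : g x = g (pneg x).
  by rewrite gx gnx; have := Hd; rewrite /det_set => ->.
have hx := pcl_herm HX xY.
have Hc := pcomm_neg x.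
have := g_hom HX Hg xY nxY Hc.
rewrite pmul_neg // -E addbb (g_negI Hg) //.
by rewrite -(pmul_neg hx); apply: pcl_closed.
Qed.
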